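(* Let $G$ be a group with identity $e$ and let $\mathcal I\subseteq G$ be a set of involutions ($i^2=e$ for $i\in\mathcal I$) such that $G=\langle \mathcal I\rangle$ and for every $a,b\in\mathcal I$ there exists $t\in G$ with $t^2=ab$. Let $H$ be an arbitrary abelian group. If $f:G\to H$ satisfies $f(xy)+f(xy^{-1})=2f(x)$ for all $x,y\in G$ and $f(e)=0$, then $f$ is a group homomorphism and also satisfies $f(xy)+f(x^{-1}y)=2f(y)$ for all $x,y\in G$. Consequently, $S_1(G,H)=S_{1,2}(G,H)=\mathrm{Hom}(G,H)\cong \mathrm{Hom}(G/[G,G],H)$.
   Context: $H$ is written additively. $S_1(G,H)$ denotes the set of functions $f:G\to H$ with $f(e)=0$ satisfying (J1): $f(xy)+f(xy^{-1})=2f(x)$ for all $x,y\in G$; $S_2(G,H)$ is the set of such normalized functions satisfying (J2): $f(xy)+f(x^{-1}y)=2f(y)$ for all $x,y\in G$; and $S_{1,2}(G,H)=S_1(G,H)\cap S_2(G,H)$. $[G,G]$ is the commutator subgroup, so $G/[G,G]$ is the abelianization. *)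

(* Defs.v *)
From HB Require Import structures.
From mathcomp Require Import all_boot all_algebra.
From mathcomp Require Import monoid.
Set Implicit Arguments. Unset Strict Implicit. Unset Printing Implicit Defensive.
Import GRing.Theory.
Local Open Scope ring_scope.

Definition is_subgroup (G : groupType) (S : G -> Prop) : Prop :=
  [/\ S 1%g, (forall x y, S x -> S y -> S (x * y)%g) & (forall x, S x -> S (x^-1)%g)].

Definition gen_by (G : groupType) (A : G -> Prop) (x : G) : Prop :=
  forall S : G -> Prop, is_subgroup S -> (forall a, A a -> S a) -> S x.

Definition comm_subgroup (G : groupType) : G -> Prop :=
  gen_by (fun c : G => exists x y : G, c = (x^-1 * y^-1 * x * y)%g).

Definition S1 (G : groupType) (H : zmodType) (f : G -> H) : Prop :=
  f 1%g = 0 /\ forall x y : G, f (x * y)%g + f (x * y^-1)%g = (f x *+ 2)%R.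

Definition S2 (G : groupType) (H : zmodType) (f : G -> H) : Prop :=
  f 1%g = 0 /\ forall x y : G, f (x * y)%g + f (x^-1 * y)%g = (f y *+ 2)%R.

Definition S12 (G : groupType) (H : zmodType) (f : G -> H) : Prop :=
  S1 f /\ S2 f.

Definition is_hom (G : groupType) (H : zmodType) (f : G -> H) : Prop :=
  forall x y : G, f (x * y)%g = f x + f y.

(* Main.v *)
Require Import Defs.
From HB Require Import structures.
From mathcomp Require Import all_boot all_algebra.
From mathcomp Require Import monoid.
Import GRing.Theory.

Local Open Scope ring_scope.
Local Open Scope group_scope.

Lemma gen_ind (G : groupType) (I S : G -> Prop) :
  (forall x : G, gen_by I x) -> is_subgroup S -> (forall a, I a -> S a) -> forall x, S x.
Proof. by move=> Ig HS HI x; apply: Ig. Qed.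

Lemma S1_inv (G : groupType) (H : zmodType) (f : G -> H) :
  S1 f -> forall y, f y^-1 = - f y.
Proof.
move=> [f1 J] y; have := J 1 y; rewrite !mul1g f1 mul0rn => /eqP.
by rewrite addr_eq0 => /eqP ->; rewrite opprK.
Qed.

Lemma S1_yzy (G : groupType) (H : zmodType) (f : G -> H) :
  S1 f -> forall y z, f (y * z * y) = (f y *+ 2 + f z)%R.
Proof.
move=> Sf y z; have fV := S1_inv _ _ _ Sf; case: Sf => f1 J.
have := J y^-1 (y * z); rewrite mulgA mulVg mul1g invgM fV.
have -> : y^-1 * (z^-1 * y^-1) = (y * z * y)^-1 by rewrite !invgM mulgA.
rewrite fV => E.
have -> : f (y * z * y)%g = (- (f z + - f (y * z * y)%g) + f z)%R.
  by rewrite opprD opprK addrAC addNr add0r.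
by rewrite E mulNrn opprK.
Qed.


Definition Padd (G : groupType) (H : zmodType) (f : G -> H) (y : G) : Prop :=
  forall z, f (y * z)%g = (f y + f z)%R.
Arguments Padd {G H} f y.

Lemma Padd_sub (G : groupType) (H : zmodType) (f : G -> H) :
  S1 f -> is_subgroup (Padd f).
Proof.
move=> Sf; have fV := S1_inv _ _ _ Sf; case: (Sf) => f1 J.
split.
- by move=> z; rewrite mul1g f1 add0r.
- by move=> x y Px Py z; rewrite Px -mulgA Px Py addrA.
- move=> x Px z.
  have := Px (x^-1 * z); rewrite mulgA mulgV mul1g => E.
  by rewrite fV E addKr.
Qed.

Lemma S1_hom (G : groupType) (H : zmodType) (I : G -> Prop)
  (Iinv : forall i, I i -> (i * i)%g = 1%g)
  (Igen : forall x : G, gen_by I x)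
  (Isq : forall a b, I a -> I b -> exists t : G, (t * t)%g = (a * b)%g)
  (f : G -> H) : S1 f -> is_hom f.
Proof.
move=> Sf; have fV := S1_inv _ _ _ Sf; have yzy := S1_yzy _ _ _ Sf.
have PS := @Padd_sub _ _ _ Sf.
case: (Sf) => f1 J.
have f2 : forall t, f (t * t) = (f t *+ 2)%R.
  by move=> t; have := J t t; rewrite mulgV f1 addr0.
have Ia : forall a, I a -> a^-1 = a by move=> a /Iinv /mulg1_eq.
have I2 : forall a, I a -> (f a *+ 2 = 0)%R.
  by move=> a Ha; have := yzy a 1; rewrite mulg1 Iinv // f1 addr0 => <-.
have Cg : forall g z, f (g * z * g^-1) = f z.
  apply: (@gen_ind _ _ (fun g => forall z, f (g * z * g^-1) = f z) Igen).
  - split.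
    + by move=> z; rewrite mul1g invg1 mulg1.
    + move=> x y Sx Sy z; rewrite invgM.
      have -> : x * y * z * (y^-1 * x^-1) = x * (y * z * y^-1) * x^-1 by rewrite !mulgA.
      by rewrite Sx Sy.
    + move=> x Sx z; rewrite invgK.
      have := Sx (x^-1 * z * x); rewrite !mulgA mulgV mul1g mulgK => ->; done.
  - by move=> a Ha z; rewrite Ia // yzy I2 // add0r.
have comm : forall u v, f (u * v) = f (v * u).
  by move=> u v; have := Cg u (v * u); rewrite mulgA mulgK => ->.
have Psq : forall t, Padd f (t * t).
  by move=> t z; rewrite f2 -mulgA comm yzy.
case: PS => P1 PM PV.
have Pconj : forall a y, I a -> Padd f y -> Padd f (a * y * a).
  move=> a y Ha Py z.
  have E1 : f (a * y * a) = f y by rewrite yzy I2 // add0r.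
  have E2 : f (a * y * a * z) = f (y * (a * z * a)).
    by rewrite -!mulgA (comm a) !mulgA.
  by rewrite E1 E2 Py yzy I2 // add0r.
have Pa : forall a, I a -> Padd f a.
  move=> a Ha.
  have aa := Iinv a Ha.
  have Q : forall x, Padd f x \/ Padd f (x * a).
    apply: (@gen_ind _ _ (fun x => Padd f x \/ Padd f (x * a)) Igen) => /=.
    - split => /=.
      + by left.
      + move=> x y [Px|Pxa] [Py|Pya].
        * by left; apply: PM.
        * by right; rewrite -mulgA; apply: PM.
        * right; have -> : x * y * a = (x * a) * (a * y * a).
            by rewrite !mulgA -[x * a * a]mulgA aa mulg1.
          by apply: PM => //; apply: (Pconj _ _ Ha).
        * left; have -> : x * y = (x * a) * (a * (y * a) * a).
            by rewrite !mulgA -[x * a * a]mulgA aa mulg1 -mulgA aa mulg1.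
          by apply: PM => //; apply: (Pconj _ _ Ha).
      + move=> x [Px|Pxa]; first by left; apply: PV.
        right; have -> : x^-1 * a = a * (a * x^-1) * a.
          by rewrite mulgA aa mul1g.
        apply: (Pconj _ _ Ha); have H' := PV _ Pxa.
        by rewrite invgM (Ia _ Ha) in H'.
    - move=> b Hb /=; right; have [t Ht] := Isq b a Hb Ha.
      by rewrite -Ht; apply: Psq.
  move=> z; rewrite comm; case: (Q z) => [Pz|Pza]; first by rewrite Pz addrC.
  have := Pza a; rewrite -mulgA aa mulg1 => E.
  by rewrite E addrCA -mulr2n I2 // addr0.
move=> x y; apply: (@gen_ind _ _ (Padd f) Igen) => //.
Qed.

Theorem mainTheorem5 (G : groupType) (H : zmodType) (I : G -> Prop)
  (Iinv : forall i, I i -> (i * i)%g = 1%g)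
  (Igen : forall x : G, gen_by I x)
  (Isq : forall a b, I a -> I b -> exists t : G, (t * t)%g = (a * b)%g) :
  (forall f : G -> H, S1 f -> is_hom f /\ S2 f) /\
  (forall f : G -> H, S1 f <-> S12 f) /\
  (forall f : G -> H, S12 f <-> is_hom f) /\
  (forall f : G -> H, is_hom f -> forall x, comm_subgroup x -> f x = 0%R).
Proof.
have homP : forall f : G -> H, is_hom f -> S1 f /\ S2 f.
  move=> f hf.
  have f1 : f 1%g = 0%R.
    by apply: (addrI (f 1%g)); rewrite addr0 -hf mulg1.
  have fV : forall x, f x^-1 = (- f x)%R.
    move=> x; by apply/eqP; rewrite -addr_eq0 addrC -hf mulgV f1.
  split; split => // x y; rewrite !hf ?fV.
  - by rewrite addrACA subrr addr0 mulr2n.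
  - by rewrite addrACA addrN add0r mulr2n.
have A : forall f : G -> H, S1 f -> is_hom f /\ S2 f.
  move=> f Sf; have hf := @S1_hom G H I Iinv Igen Isq f Sf.
  by split => //; case: (homP f hf).
split => //; split.
  by move=> f; split => [Sf|[]//]; split => //; case: (A f Sf).
split.
  move=> f; split => [[Sf _]|hf]; first by case: (A f Sf).
  exact: homP.
move=> f hf x Hx.
have f1 : f 1%g = 0%R.
  by apply: (addrI (f 1%g)); rewrite addr0 -hf mulg1.
have fV : forall x, f x^-1 = (- f x)%R.
  move=> y; by apply/eqP; rewrite -addr_eq0 addrC -hf mulgV f1.
apply: (Hx (fun y => f y = 0%R)).
- split => //.
  + by move=> y z Hy Hz; rewrite hf Hy Hz addr0.
  + by move=> y Hy; rewrite fV Hy oppr0.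
- move=> c [u [v ->]]; rewrite !hf !fV.
  by rewrite addrAC subrK addNr.
Qed.
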